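(* Let $f:\mathbb{R}^n\times\mathbb{R}^p\to[-\infty,\infty]$ be a proper nearly convex function and $F:\mathbb{R}^n\rightrightarrows\mathbb{R}^p$ a nearly convex set-valued mapping with $\operatorname{ri}(\operatorname{dom} f)\cap\operatorname{ri}(\operatorname{gph} F)\neq\emptyset$, and let $\mu(x)=\inf\{f(x,y):y\in F(x)\}$. Then for all $w\in\mathbb{R}^n$, $$\mu^*(w)=(f^*\square F^* )(w,0)=\inf\{f^*(w_1,v_1)+F^*(w_2,v_2): w_1+w_2=w,\ v_1+v_2=0\}.$$ Moreover, if $\mu^*(w)\in\mathbb{R}$, there exist $w_1,w_2\in\mathbb{R}^n$ with $w_1+w_2=w$ and $v\in\mathbb{R}^p$ such that $\mu^*(w)=f^*(w_1,v)+F^*(w_2,-v)$.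
   Context: A set $\Omega$ is nearly convex if there is a convex set $C$ with $C\subset\Omega\subset\overline{C}$; $\operatorname{ri}\Omega=\{a\in\Omega:\exists\delta>0,\ B(a;\delta)\cap\operatorname{aff}\Omega\subset\Omega\}$. A function is nearly convex if its epigraph is nearly convex, proper if its domain $\{f<\infty\}$ is nonempty and $f>-\infty$; a set-valued mapping is nearly convex if its graph $\operatorname{gph}F=\{(x,y):y\in F(x)\}$ is. Fenchel conjugate: $f^*(z)=\sup_x\{\langle z,x\rangle-f(x)\}$. Fenchel conjugate of a set-valued mapping: $F^*(u,v)=\sigma_{\operatorname{gph}F}(u,v)=\sup\{\langle u,x\rangle+\langle v,y\rangle:(x,y)\in\operatorname{gph}F\}$. Infimal convolution: $(g\square h)(z)=\inf\{g(z_1)+h(z_2):z_1+z_2=z\}$. *)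

(* Defs.v *)
From HB Require Import structures.
From mathcomp Require Import all_boot all_order all_algebra.
From mathcomp Require Import boolp classical_sets reals constructive_ereal ereal.
Set Implicit Arguments. Unset Strict Implicit. Unset Printing Implicit Defensive.
Import Order.TTheory GRing.Theory Num.Theory.
Local Open Scope classical_set_scope.
Local Open Scope ring_scope.

Section Defs.
Variable R : realType.

Definition dotv (m : nat) (u v : 'rV[R]_m) : R := \sum_(i < m) u 0 i * v 0 i.

Definition dist2 (m : nat) (x y : 'rV[R]_m) : R := \sum_(i < m) (x 0 i - y 0 i) ^+ 2.

Definition eball (m : nat) (a : 'rV[R]_m) (d : R) : set 'rV[R]_m :=
  [set x | dist2 x a < d ^+ 2].

Definition eclosure (m : nat) (C : set 'rV[R]_m) : set 'rV[R]_m :=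
  [set x | forall e : R, 0 < e -> exists c, C c /\ dist2 x c < e ^+ 2].

Definition cvx_set (m : nat) (C : set 'rV[R]_m) : Prop :=
  forall x y t, C x -> C y -> 0 <= t -> t <= 1 -> C ((1 - t) *: x + t *: y).

Definition affhull (m : nat) (O : set 'rV[R]_m) : set 'rV[R]_m :=
  [set x | exists (k : nat) (pts : 'I_k -> 'rV[R]_m) (c : 'I_k -> R),
     (forall i, O (pts i)) /\ \sum_(i < k) c i = 1 /\ x = \sum_(i < k) c i *: pts i].

Definition relint (m : nat) (O : set 'rV[R]_m) : set 'rV[R]_m :=
  [set a | O a /\ exists d : R, 0 < d /\ (eball a d `&` affhull O) `<=` O].

Definition nearly_convex (m : nat) (O : set 'rV[R]_m) : Prop :=
  exists C, cvx_set C /\ C `<=` O /\ O `<=` eclosure C.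

(* functions on R^n x R^p, with the pair (x,y) identified with row_mx x y *)
Definition epi (n p : nat) (f : 'rV[R]_n -> 'rV[R]_p -> \bar R) : set 'rV[R]_(n + p + 1) :=
  [set z | exists x y (a : R), z = row_mx (row_mx x y) (\row_(j < 1) a) /\ (f x y <= a%:E)%E].

Definition domf (n p : nat) (f : 'rV[R]_n -> 'rV[R]_p -> \bar R) : set 'rV[R]_(n + p) :=
  [set z | exists x y, z = row_mx x y /\ (f x y < +oo)%E].

Definition proper_fun (n p : nat) (f : 'rV[R]_n -> 'rV[R]_p -> \bar R) : Prop :=
  (exists x y, (f x y < +oo)%E) /\ (forall x y, (-oo < f x y)%E).

Definition nearly_convex_fun (n p : nat) (f : 'rV[R]_n -> 'rV[R]_p -> \bar R) : Prop :=
  nearly_convex (epi f).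

Definition gph (n p : nat) (F : 'rV[R]_n -> set 'rV[R]_p) : set 'rV[R]_(n + p) :=
  [set z | exists x y, z = row_mx x y /\ F x y].

Definition nearly_convex_map (n p : nat) (F : 'rV[R]_n -> set 'rV[R]_p) : Prop :=
  nearly_convex (gph F).

Definition fconj2 (n p : nat) (f : 'rV[R]_n -> 'rV[R]_p -> \bar R)
  (u : 'rV[R]_n) (v : 'rV[R]_p) : \bar R :=
  ereal_sup [set t | exists x y, t = ((dotv u x + dotv v y)%:E - f x y)%E].

Definition fconj (n : nat) (g : 'rV[R]_n -> \bar R) (w : 'rV[R]_n) : \bar R :=
  ereal_sup [set t | exists x, t = ((dotv w x)%:E - g x)%E].

Definition mapconj (n p : nat) (F : 'rV[R]_n -> set 'rV[R]_p)
  (u : 'rV[R]_n) (v : 'rV[R]_p) : \bar R :=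
  ereal_sup [set t | exists x y, F x y /\ t = (dotv u x + dotv v y)%:E].

Definition infconv (n p : nat) (g h : 'rV[R]_n -> 'rV[R]_p -> \bar R)
  (w : 'rV[R]_n) (v : 'rV[R]_p) : \bar R :=
  ereal_inf [set t | exists w1 w2 v1 v2,
     w1 + w2 = w /\ v1 + v2 = v /\ t = (g w1 v1 + h w2 v2)%E].

Definition optval (n p : nat) (f : 'rV[R]_n -> 'rV[R]_p -> \bar R)
  (F : 'rV[R]_n -> set 'rV[R]_p) (x : 'rV[R]_n) : \bar R :=
  ereal_inf [set t | exists y, F x y /\ t = f x y].

End Defs.

(* Main.v *)
Require Import Defs.
From HB Require Import structures.
From mathcomp Require Import all_boot all_order all_algebra.
From mathcomp Require Import boolp classical_sets reals constructive_ereal ereal.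
From mathcomp Require Import ring lra.
Import Order.TTheory GRing.Theory Num.Theory.
Local Open Scope classical_set_scope.
Local Open Scope ring_scope.
Section Basics.
Context {R : realType}.
Implicit Types (N : nat).

Lemma dotvE {N} (u v : 'rV[R]_N) : dotv u v = (u *m v^T) 0 0.
Proof. rewrite /dotv !mxE; apply: eq_bigr => i _; by rewrite !mxE. Qed.

Lemma dotvC {N} (u v : 'rV[R]_N) : dotv u v = dotv v u.
Proof. by rewrite /dotv; apply: eq_bigr => i _; rewrite mulrC. Qed.

Lemma dotvDr {N} (u v w : 'rV[R]_N) : dotv u (v + w) = dotv u v + dotv u w.
Proof. by rewrite /dotv -big_split; apply: eq_bigr => i _; rewrite mxE mulrDr. Qed.

Lemma dotvDl {N} (u v w : 'rV[R]_N) : dotv (v + w) u = dotv v u + dotv w u.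
Proof. by rewrite dotvC dotvDr !(dotvC u). Qed.

Lemma dotvZr {N} (u v : 'rV[R]_N) a : dotv u (a *: v) = a * dotv u v.
Proof. by rewrite /dotv mulr_sumr; apply: eq_bigr => i _; rewrite mxE mulrCA. Qed.

Lemma dotvZl {N} (u v : 'rV[R]_N) a : dotv (a *: v) u = a * dotv v u.
Proof. by rewrite dotvC dotvZr dotvC. Qed.

Lemma dotv0r {N} (u : 'rV[R]_N) : dotv u 0 = 0.
Proof. by rewrite /dotv big1 // => i _; rewrite mxE mulr0. Qed.

Lemma dotv0l {N} (u : 'rV[R]_N) : dotv 0 u = 0.
Proof. by rewrite dotvC dotv0r. Qed.

Lemma dotvNr {N} (u v : 'rV[R]_N) : dotv u (- v) = - dotv u v.
Proof. by rewrite -scaleN1r dotvZr mulN1r. Qed.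

Lemma dotvNl {N} (u v : 'rV[R]_N) : dotv (- u) v = - dotv u v.
Proof. by rewrite dotvC dotvNr dotvC. Qed.

Lemma dotvBr {N} (u v w : 'rV[R]_N) : dotv u (v - w) = dotv u v - dotv u w.
Proof. by rewrite dotvDr dotvNr. Qed.

Lemma dotvBl {N} (u v w : 'rV[R]_N) : dotv (v - w) u = dotv v u - dotv w u.
Proof. by rewrite dotvDl dotvNl. Qed.

Lemma dotv_row_mx {n p} (x1 x2 : 'rV[R]_n) (y1 y2 : 'rV[R]_p) :
  dotv (row_mx x1 y1) (row_mx x2 y2) = dotv x1 x2 + dotv y1 y2.
Proof.
rewrite /dotv big_split_ord /=; congr (_ + _); apply: eq_bigr => i _;
by rewrite ?row_mxEl ?row_mxEr.
Qed.

Lemma dist2E {N} (x y : 'rV[R]_N) : dist2 x y = dotv (x - y) (x - y).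
Proof. by rewrite /dist2 /dotv; apply: eq_bigr => i _; rewrite !mxE expr2. Qed.

Lemma dist2_ge0 {N} (x y : 'rV[R]_N) : 0 <= dist2 x y.
Proof. by rewrite /dist2 sumr_ge0 // => i _; rewrite sqr_ge0. Qed.

Lemma dist2_sub {N} (x y : 'rV[R]_N) : dist2 x y = dist2 (x - y) 0.
Proof. by rewrite !dist2E subr0. Qed.

Lemma dist2C {N} (x y : 'rV[R]_N) : dist2 x y = dist2 y x.
Proof. by rewrite !dist2E -opprB dotvNl dotvNr opprK. Qed.

Lemma dist2Z {N} (x : 'rV[R]_N) t : dist2 (t *: x) 0 = t ^+ 2 * dist2 x 0.
Proof. by rewrite !dist2E !subr0 dotvZl dotvZr mulrA expr2. Qed.

Lemma dist2D {N} (x y : 'rV[R]_N) :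
  dist2 (x + y) 0 <= 2 * dist2 x 0 + 2 * dist2 y 0.
Proof.
rewrite /dist2 !mulr_sumr -big_split /=; apply: ler_sum => i _.
rewrite !mxE !subr0.
have := sqr_ge0 (x 0 i - y 0 i); lra.
Qed.

Lemma coord_le_dist2 {N} (x : 'rV[R]_N) j : (x 0 j) ^+ 2 <= dist2 x 0.
Proof.
rewrite /dist2 (bigD1 j) //= mxE subr0 lerDl sumr_ge0 // => i _.
by rewrite sqr_ge0.
Qed.

Lemma coord_small {N} (x : 'rV[R]_N) j rho : 0 < rho -> dist2 x 0 < rho ^+ 2 ->
  `|x 0 j| < rho.
Proof.
move=> r0 h; have h2 := le_lt_trans (coord_le_dist2 x j) h.
by rewrite -(ltr_sqr (normr_ge0 _) (ltW r0)) // real_normK ?num_real.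
Qed.

Lemma mulmx_small {N k} (x : 'rV[R]_N) (P : 'M[R]_(N, k)) i rho :
  0 < rho -> dist2 x 0 < rho ^+ 2 ->
  `|(x *m P) 0 i| <= rho * \sum_(j < N) `|P j i|.
Proof.
move=> r0 h; rewrite mxE mulr_sumr.
apply: le_trans (ler_norm_sum _ _ _) _; apply: ler_sum => j _.
rewrite normrM ler_wpM2r //; exact: ltW (coord_small _ _ _ r0 h).
Qed.

Lemma dotv_small {N} (d x : 'rV[R]_N) rho :
  0 < rho -> dist2 x 0 < rho ^+ 2 ->
  `|dotv d x| <= rho * \sum_(j < N) `|d 0 j|.
Proof.
move=> r0 h; rewrite /dotv mulr_sumr.
apply: le_trans (ler_norm_sum _ _ _) _; apply: ler_sum => j _.
rewrite normrM mulrC ler_wpM2r //; exact: ltW (coord_small _ _ _ r0 h).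
Qed.

End Basics.
Section LinAlg.
Context {R : realType}.

Lemma sub_col_mxr {k m N} (A : 'M[R]_(k, N)) (B : 'M[R]_(m, N)) :
  (B <= col_mx A B)%MS.
Proof. by apply/row_subP => i; rewrite -(rowKd i A B) row_sub. Qed.

Lemma sub_col_mxl {k m N} (A : 'M[R]_(k, N)) (B : 'M[R]_(m, N)) :
  (A <= col_mx A B)%MS.
Proof. by apply/row_subP => i; rewrite -(rowKu i A B) row_sub. Qed.

Lemma span_max {N} (X : set 'rV[R]_N) :
  exists k (M : 'M[R]_(k, N)), (forall i, X (row i M)) /\
     (forall x, X x -> (x <= M)%MS).
Proof.
apply: contrapT => H.
have step : forall r, exists k (M : 'M[R]_(k, N)),
    (forall i, X (row i M)) /\ (r <= \rank M)%N.
  elim=> [|r [k [M [HM Hr]]]].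
    by exists 0%N, 0; split => // -[].
  have [x [Xx nx]] : exists x, X x /\ ~ (x <= M)%MS.
    apply: contrapT => H2; apply: H; exists k, M; split => // x Xx.
    by apply: contrapT => nx; apply: H2; exists x.
  exists (1 + k)%N, (col_mx x M); split.
    move=> i; rewrite -(splitK i); case: (split i) => j /=.
      by rewrite rowKu (ord1 j) (_ : row 0 x = x) //; apply/rowP => l; rewrite mxE.
    by rewrite rowKd.
  have sMM := sub_col_mxr x M.
  have [le eq] := mxrank_leqif_sup sMM.
  have : \rank M != \rank (col_mx x M).
    rewrite eq; apply/negP => sub; apply: nx.
    exact: submx_trans (sub_col_mxl x M) sub.
  by move=> ne; apply: leq_ltn_trans Hr _; rewrite ltn_neqAle ne le.
have [k [M [_ HM]]] := step N.+1.
by have := rank_leq_col M; rewrite leqNgt HM.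
Qed.

Lemma closed_sub {k N} (M : 'M[R]_(k, N)) (x : 'rV[R]_N) :
  (forall e : R, 0 < e -> exists v, (v <= M)%MS /\ dist2 x v < e ^+ 2) ->
  (x <= M)%MS.
Proof.
move=> H; rewrite submxE; apply/eqP/rowP => j; rewrite [RHS]mxE.
set K := cokermx M.
set S := \sum_(i < N) `|K i j|.
apply/eqP; rewrite -normr_le0; apply/ler_addgt0Pr => e e0.
rewrite add0r.
have S0 : 0 <= S by rewrite sumr_ge0.
pose rho := e / (S + 1).
have rho0 : 0 < rho by rewrite divr_gt0 // ltr_wpDl.
have [v [vM hv]] := H rho rho0.
have vK : v *m K = 0 by apply/eqP; rewrite -submxE.
have eq1 : (x *m K) 0 j = ((x - v) *m K) 0 j.
  by rewrite mulmxBl vK subr0.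
rewrite eq1.
have h1 : dist2 (x - v) 0 < rho ^+ 2 by rewrite -dist2_sub.
have := mulmx_small (x - v) K j rho rho0 h1 => /le_trans; apply.
rewrite /rho -/S mulrAC ler_pdivrMr ?ltr_wpDl // ler_wpM2l ?(ltW e0) //.
by rewrite lerDl.
Qed.

Lemma proj_sub {k N} (M : 'M[R]_(k, N)) (y : 'rV[R]_N) :
  (y *m (pinvmx M *m M) <= M)%MS.
Proof. by rewrite mulmxA submxMl. Qed.

Lemma proj_id {k N} (M : 'M[R]_(k, N)) (y : 'rV[R]_N) :
  (y <= M)%MS -> y *m (pinvmx M *m M) = y.
Proof. by move=> h; rewrite mulmxA mulmxKpV. Qed.

End LinAlg.
Section HB.
Context {R : realType}.

Definition cvxS {N} (S : 'rV[R]_N -> R -> Prop) :=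
  forall u1 s1 u2 s2 l, S u1 s1 -> S u2 s2 -> 0 <= l -> l <= 1 ->
    S (l *: u1 + (1 - l) *: u2) (l * s1 + (1 - l) * s2).

Lemma dotv_delta {N} (b : 'rV[R]_N) k : dotv b (delta_mx 0 k) = b 0 k.
Proof.
rewrite /dotv (bigD1 k) //= big1 ?addr0; first by rewrite mxE !eqxx mulr1.
by move=> i /negbTE ik; rewrite mxE ik andbF mulr0.
Qed.

Lemma quot_le (t1 t2 D1 D2 : R) : t1 < 0 -> 0 < t2 ->
  0 <= t2 * D1 - t1 * D2 -> D1 / t1 <= D2 / t2.
Proof.
move=> h1 h2 h.
set q1 := D1 / t1; set q2 := D2 / t2.
have e1 : D1 = q1 * t1 by rewrite /q1 divfK // lt_eqF.
have e2 : D2 = q2 * t2 by rewrite /q2 divfK // gt_eqF.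
move: h; rewrite e1 e2.
have -> : t2 * (q1 * t1) - t1 * (q2 * t2) = (q1 - q2) * (t1 * t2) by ring.
have ng : t1 * t2 < 0 by rewrite nmulr_rlt0.
set p := t1 * t2 => hh.
rewrite -subr_le0; apply: contraTT hh; rewrite -!ltNge => hq.
by rewrite pmulr_rlt0.
Qed.

Definition supp {N} (k : nat) (u : 'rV[R]_N) :=
  forall j : 'I_N, (k <= j)%N -> u 0 j = 0.

Lemma HB_set {N} (S : 'rV[R]_N -> R -> Prop) :
  cvxS S -> (forall s, S 0 s -> 0 <= s) ->
  (forall y, exists t, 0 < t /\ exists s, S (t *: y) s) ->
  exists b, forall u s, S u s -> dotv b u <= s.
Proof.
move=> cS S0 core.
suff H : forall k, (k <= N)%N -> exists b, forall u s, S u s -> supp k u ->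
    dotv b u <= s.
  have [b Hb] := H N (leqnn N); exists b => u s Sus; apply: Hb => // j.
  by rewrite leqNgt ltn_ord.
elim=> [_|k IH kN].
  exists 0 => u s Sus su; rewrite dotv0l.
  have u0 : u = 0 by apply/rowP => j; rewrite mxE; apply: su.
  by rewrite u0 in Sus; exact: S0.
have [b Hb] := IH (ltnW kN).
pose kk : 'I_N := Ordinal kN.
pose e : 'rV[R]_N := delta_mx 0 kk.
have e_kk : e 0 kk = 1 by rewrite mxE !eqxx.
have e_j : forall j, j != kk -> e 0 j = 0 by move=> j /negbTE h; rewrite mxE h andbF.
have dot_e : forall c, dotv c e = c 0 kk by move=> c; exact: dotv_delta.
clearbody e.
pose D (u : 'rV[R]_N) (s : R) := s - dotv b (u - u 0 kk *: e).
pose A := [set x : R | exists (u : 'rV[R]_N) (s : R), [/\ S u s, supp k.+1 u, 0 < u 0 kk & x = D u s / u 0 kk]].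
pose L := [set x : R | exists (u : 'rV[R]_N) (s : R), [/\ S u s, supp k.+1 u, u 0 kk < 0 & x = D u s / u 0 kk]].
have suppS : forall (u : 'rV[R]_N) (j : 'I_N), supp k.+1 u -> (k <= j)%N -> j != kk -> u 0 j = 0.
  move=> u j su kj jk; apply: su; rewrite ltn_neqAle kj andbT.
  by apply: contra jk => /eqP h; apply/eqP/val_inj; rewrite /= h.
have key : forall l a, L l -> A a -> l <= a.
  move=> l a [u1 [s1 [S1 sp1 t1 ->]]] [u2 [s2 [S2 sp2 t2 ->]]].
  apply: quot_le => //.
  have dpos : 0 < u2 0 kk - u1 0 kk by rewrite subr_gt0 (lt_trans t1 t2).
  set lam := u2 0 kk / (u2 0 kk - u1 0 kk).
  have l0 : 0 <= lam by rewrite divr_ge0 // ltW.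
  have l1 : lam <= 1 by rewrite ler_pdivrMr // mul1r lerDl oppr_ge0 ltW.
  have Sp := cS _ _ _ _ lam S1 S2 l0 l1.
  have spp : supp k (lam *: u1 + (1 - lam) *: u2).
    move=> j kj; case: (eqVneq j kk) => [->|jk].
      by rewrite !mxE /lam; field; rewrite (gt_eqF dpos).
    by rewrite !mxE (suppS u1 j) // (suppS u2 j) // !mulr0 addr0.
  have := Hb _ _ Sp spp.
  rewrite dotvDr !dotvZr /D !dotvBr !dotvZr dot_e => hh.
  have -> : u2 0 kk * (s1 - (dotv b u1 - u1 0 kk * b 0 kk)) -
    u1 0 kk * (s2 - (dotv b u2 - u2 0 kk * b 0 kk)) =
    (u2 0 kk - u1 0 kk) * ((lam * s1 + (1 - lam) * s2) -
       (lam * dotv b u1 + (1 - lam) * dotv b u2)).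
    by rewrite /lam; field; rewrite (gt_eqF dpos).
  by apply: mulr_ge0; [exact: ltW | rewrite subr_ge0].
have [a0 Aa0] : exists a, A a.
  have [t [t0 [s Ss]]] := core e.
  exists (D (t *: e) s / (t *: e) 0 kk), (t *: e), s; split => //.
    by move=> j kj; rewrite mxE e_j ?mulr0 //; apply: contraTneq kj => ->; rewrite ltnn.
  by rewrite mxE e_kk mulr1.
have [l0 Ll0] : exists l, L l.
  have [t [t0 [s Ss]]] := core (- e).
  exists (D (t *: - e) s / (t *: - e) 0 kk), (t *: - e), s; split => //.
    move=> j kj; rewrite !mxE e_j ?oppr0 ?mulr0 //.
    by apply: contraTneq kj => ->; rewrite ltnn.
  by rewrite !mxE e_kk mulrN1 oppr_lt0.
have hubL : has_ubound L by exists a0 => l Ll; exact: key.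
pose sig := sup L.
have sigA : forall a, A a -> sig <= a.
  by move=> a Aa; apply: ge_sup; [exists l0 | move=> l Ll; exact: key].
have sigL : forall l, L l -> l <= sig by move=> l Ll; exact: ub_le_sup.
exists (b + (sig - b 0 kk) *: e) => u s Sus su.
rewrite dotvDl dotvZl (dotvC e) dot_e.
have eD : D u s = s - dotv b u + u 0 kk * b 0 kk.
  by rewrite /D dotvBr dotvZr dot_e; ring.
have [t0|tn|t0] := ltgtP (u 0 kk) 0.
- have := sigL _ (ex_intro _ u (ex_intro _ s (And4 Sus su t0 erefl))).
  rewrite ler_ndivrMr // eD => h.
  suff : dotv b u + (sig - b 0 kk) * u 0 kk <= s by [].
  lra.
- have := sigA _ (ex_intro _ u (ex_intro _ s (And4 Sus su tn erefl))).
  rewrite ler_pdivlMr // eD => h.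
  suff : dotv b u + (sig - b 0 kk) * u 0 kk <= s by [].
  lra.
- rewrite t0 mulr0 addr0; apply: Hb => // j kj.
  by case: (eqVneq j kk) => [->//|jk]; exact: suppS.
Qed.
End HB.
Section Aff.
Context {R : realType}.

Lemma unlift_widen k (j : 'I_k) : unlift ord_max (widen_ord (leqnSn k) j) = Some j.
Proof.
have -> : widen_ord (leqnSn k) j = lift ord_max j.
  by apply: val_inj; rewrite /= /bump leqNgt ltn_ord.
by rewrite liftK.
Qed.

Lemma aff_comb {N} (O : set 'rV[R]_N) x q al :
  affhull O x -> O q -> affhull O (al *: x + (1 - al) *: q).
Proof.
move=> [k [pts [c [Op [sc ->]]]]] Oq.
exists k.+1, (fun i => if unlift ord_max i is Some j then pts j else q),
  (fun i => if unlift ord_max i is Some j then al * c j else 1 - al).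
split; first by move=> i; case: unlift.
split.
  rewrite big_ord_recr /= unlift_none.
  under eq_bigr do rewrite unlift_widen.
  by rewrite -mulr_sumr sc mulr1 addrC subrK.
rewrite big_ord_recr /= unlift_none.
under [X in _ = X + _]eq_bigr do rewrite unlift_widen.
by rewrite scaler_sumr; congr (_ + _); apply: eq_bigr => i _; rewrite scalerA.
Qed.

Lemma conv_comb {N} (C : set 'rV[R]_N) k (pts : 'I_k -> 'rV[R]_N) (c : 'I_k -> R) :
  cvx_set C -> (forall i, C (pts i)) -> (forall i, 0 <= c i) ->
  \sum_i c i = 1 -> C (\sum_i c i *: pts i).
Proof.
move=> cC; elim: k pts c => [|k IH] pts c Cp c0 sc.
  by move: sc; rewrite big_ord0 => /eqP; rewrite eq_sym oner_eq0.
rewrite big_ord_recr /=; move: sc; rewrite big_ord_recr /= => sc.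
set t := c ord_max; set s := \sum_(i < k) c (widen_ord (leqnSn k) i).
have hs : s = 1 - t by rewrite -sc addrK.
have t0 : 0 <= t by exact: c0.
have t1 : t <= 1 by rewrite -sc lerDr sumr_ge0.
have [s0|sn0] := eqVneq s 0.
  have -> : \sum_(i < k) c (widen_ord (leqnSn k) i) *: pts (widen_ord (leqnSn k) i) = 0.
    rewrite big1 // => i _.
    have : c (widen_ord (leqnSn k) i) = 0.
      apply/eqP; rewrite eq_le c0 andbT -s0 /s (bigD1 i) //= lerDl sumr_ge0 //.
    by move=> ->; rewrite scale0r.
  have -> : t = 1 by move: hs; rewrite s0 => /eqP; rewrite eq_sym subr_eq0 => /eqP.
  by rewrite add0r scale1r.
have sp : 0 < s by rewrite lt_def sn0 sumr_ge0.
have := cC (\sum_(i < k) (c (widen_ord (leqnSn k) i) / s) *: pts (widen_ord (leqnSn k) i))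
  (pts ord_max) t.
rewrite -hs => H.
have -> : \sum_(i < k) c (widen_ord (leqnSn k) i) *: pts (widen_ord (leqnSn k) i) =
   s *: \sum_(i < k) (c (widen_ord (leqnSn k) i) / s) *: pts (widen_ord (leqnSn k) i).
  rewrite scaler_sumr; apply: eq_bigr => i _; rewrite scalerA mulrC divfK //.
apply: H => //; apply: IH => //.
- by move=> i; rewrite divr_ge0 // ltW.
- by rewrite -mulr_suml mulfV.
Qed.


Lemma sum_ord_max {V : zmodType} k (F : option 'I_k -> V) :
  \sum_(i < k.+1) F (unlift ord_max i) = \sum_(j < k) F (Some j) + F None.
Proof.
by rewrite big_ord_recr /= unlift_none; congr (_ + _); apply: eq_bigr => j _; rewrite unlift_widen.
Qed.

Lemma bary_ball {N} (C : set 'rV[R]_N) c0 k (M : 'M[R]_(k, N)) :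
  cvx_set C -> C c0 -> (forall i, C (row i M + c0)) ->
  exists b r, [/\ 0 < r, C b, (b - c0 <= M)%MS &
    forall x, (x - b <= M)%MS -> dist2 x b < r ^+ 2 -> C x].
Proof.
move=> cC Cc0 CM.
pose ka : R := (k.+1%:R)^-1.
have ka0 : 0 < ka by rewrite invr_gt0 ltr0n.
have kka : k%:R * ka <= 1.
  by rewrite ler_pdivrMr ?ltr0n // mul1r ler_nat.
pose b := c0 + ka *: \sum_i row i M.
pose P := pinvmx M.
pose Kt := \sum_(j < k) \sum_(l < N) `|P l j|.
have Kt0 : 0 <= Kt by apply: sumr_ge0 => j _; apply: sumr_ge0 => l _.
pose r := ka ^+ 2 / (Kt + 1).
have r0 : 0 < r by rewrite divr_gt0 ?exprn_gt0 // ltr_wpDl.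
have bM : (b - c0 <= M)%MS.
  rewrite /b addrAC subrr add0r scalemx_sub // summx_sub // => i _; exact: row_sub.
have main : forall x, (x - b <= M)%MS -> dist2 x b < r ^+ 2 -> C x.
  move=> x xM xr.
  pose mu := (x - b) *m P.
  have wmu : x - b = \sum_i mu 0 i *: row i M by rewrite -mulmx_sum_row mulmxKpV.
  have mub : forall j, `|mu 0 j| <= ka ^+ 2.
    move=> j; have h1 : dist2 (x - b) 0 < r ^+ 2 by rewrite -dist2_sub.
    apply: le_trans (mulmx_small (x - b) P j r r0 h1) _.
    rewrite /r mulrAC ler_pdivrMr ?ltr_wpDl // ler_wpM2l ?exprn_ge0 ?ltW //.
    have hj : \sum_(l < N) `|P l j| <= Kt.
      rewrite /Kt (bigD1 j) //= lerDl; apply: sumr_ge0 => i _; exact: sumr_ge0.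
    by apply: le_lt_trans hj _; rewrite ltrDl ltr01.
  have smu : \sum_j mu 0 j <= ka.
    apply: le_trans (_ : \sum_(j < k) ka ^+ 2 <= _).
      by apply: ler_sum => j _; exact: le_trans (ler_norm _) (mub j).
    by rewrite sumr_const card_ord -mulr_natl expr2 mulrA ler_piMl // ltW.
  pose pts (o : option 'I_k) := if o is Some j then row j M + c0 else c0.
  pose co (o : option 'I_k) := if o is Some j then ka + mu 0 j else ka - \sum_j mu 0 j.
  have -> : x = \sum_(i < k.+1) co (unlift ord_max i) *: pts (unlift ord_max i).
    have ex : x = c0 + \sum_j (ka + mu 0 j) *: row j M.
      rewrite -(subrK b x) wmu /b.
      under [in RHS]eq_bigr do rewrite scalerDl.
      by rewrite big_split /= -scaler_sumr [LHS]addrC -addrA.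
    rewrite big_ord_recr /= unlift_none; under eq_bigr do rewrite unlift_widen.
    rewrite /= ex.
    under eq_bigr do rewrite scalerDr.
    rewrite big_split /= -scaler_suml -addrA -scalerDl.
    have -> : \sum_(i < k) (ka + mu 0 i) + (ka - \sum_j mu 0 j) = 1.
      rewrite big_split /= sumr_const card_ord -mulr_natl.
      rewrite (_ : _ + _ + _ = k%:R * ka + ka); last by ring.
      by rewrite /ka -{2}(mul1r (_^-1)) -mulrDl -natr1 mulfV.
    by rewrite scale1r addrC.
  apply: conv_comb => //.
  - by move=> i; case: unlift.
  - move=> i; case: unlift => [j|] /=.
      have := mub j; rewrite ler_norml => /andP [h _].
      have : ka ^+ 2 <= ka by rewrite expr2 ler_piMl ?(ltW ka0) // /ka invf_le1 ?ltr0n // ler1n.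
      lra.
    by rewrite subr_ge0.
  - rewrite big_ord_recr /= unlift_none; under eq_bigr do rewrite unlift_widen.
    rewrite /= big_split /= sumr_const card_ord.
    rewrite -mulr_natl (_ : _ + _ + _ = k%:R * ka + ka); last by ring.
    rewrite /ka -{2}(mul1r (_^-1)) -mulrDl -natr1 mulfV //.
exists b, r; split => //; apply: main; first by rewrite subrr sub0mx.
by rewrite dist2_sub subrr /dist2 big1 ?exprn_gt0 // => i _; rewrite !mxE subr0 expr0n.
Qed.


Lemma submx_B {m1 m2 N} (A B : 'M[R]_(m1, N)) (C : 'M[R]_(m2, N)) :
  (A <= C)%MS -> (B <= C)%MS -> (A - B <= C)%MS.
Proof. by move=> hA hB; apply: addmx_sub => //; rewrite -scaleN1r scalemx_sub. Qed.

Lemma ri_core {N} (C O : set 'rV[R]_N) a d :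
  cvx_set C -> C `<=` O -> O `<=` eclosure C -> O a -> 0 < d ->
  (eball a d `&` affhull O) `<=` O ->
  exists r, 0 < r /\ (eball a r `&` affhull O) `<=` C.
Proof.
move=> cC CO OC Oa d0 Hd.
have [c0 [Cc0 _]] := OC a Oa 1 ltr01.
pose X := [set v | exists c, C c /\ v = c - c0].
have [k [M [XM spM]]] := span_max X.
have CM : forall i, C (row i M + c0).
  by move=> i; have [c [Cc ->]] := XM i; rewrite subrK.
have [b [r [r0 Cb bM ballC]]] := bary_ball _ _ _ _ cC Cc0 CM.
have clM : forall o, eclosure C o -> (o - c0 <= M)%MS.
  move=> o oC; apply: closed_sub => e e0.
  have [c [Cc hc]] := oC e e0; exists (c - c0); split.
    by apply: spM; exists c.
  by rewrite dist2_sub opprB addrA subrK -dist2_sub.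
have affM : forall x, affhull O x -> (x - c0 <= M)%MS.
  move=> x [m [pts [mu [Op [smu ->]]]]].
  have -> : \sum_i mu i *: pts i - c0 = \sum_i mu i *: (pts i - c0).
    under [RHS]eq_bigr do rewrite scalerBr.
    by rewrite sumrB -scaler_suml smu scale1r.
  apply: summx_sub => i _; apply: scalemx_sub; apply: clM; exact: OC.
pose D := dist2 a b.
have D0 : 0 <= D by exact: dist2_ge0.
pose eps := Num.min 1 (d ^+ 2 / (4 * (D + 1))).
have epsp : 0 < eps.
  by rewrite lt_min ltr01 divr_gt0 ?exprn_gt0 // mulr_gt0 // ltr_wpDl.
have eps1 : eps <= 1 by rewrite ge_min lexx.
have epsD : eps * D <= d ^+ 2 / 4.
  have h : eps <= d ^+ 2 / (4 * (D + 1)) by rewrite ge_min lexx orbT.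
  apply: le_trans (ler_wpM2r D0 h) _.
  have D1 : 0 < D + 1 by rewrite ltr_wpDl.
  have -> : d ^+ 2 / (4 * (D + 1)) * D = d ^+ 2 / 4 * (D / (D + 1)).
    by field; rewrite (gt_eqF D1).
  rewrite ler_piMr ?divr_ge0 ?exprn_ge0 ?ltW //.
  by rewrite ltr_pdivrMr // mul1r ltrDl ltr01.
exists (d / 4); split; first by rewrite divr_gt0.
move=> x [xa xaff].
pose y := (1 + eps) *: x + (1 - (1 + eps)) *: b.
have yaff : affhull O y by apply: aff_comb => //; exact: CO.
have ya : dist2 y a < d ^+ 2.
  rewrite dist2_sub.
  have -> : y - a = (1 + eps) *: (x - a) + eps *: (a - b).
    by apply/rowP => j; rewrite !mxE; ring.
  apply: le_lt_trans (dist2D _ _) _; rewrite !dist2Z -!dist2_sub -/D.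
  have h1 : (1 + eps) ^+ 2 <= 4.
    have : 0 <= 1 + eps <= 2 by apply/andP; split; lra.
    move=> /andP [ha hb]; have := ler_pM ha ha hb hb; rewrite -expr2; lra.
  have hq := dist2_ge0 x a.
  have h4 : (1 + eps) ^+ 2 * dist2 x a <= 4 * dist2 x a by rewrite ler_wpM2r.
  have h2 : eps ^+ 2 * D <= eps * D.
    by rewrite expr2 ler_wpM2r // ler_piMl // ltW.
  move: xa; rewrite /eball /= => xa.
  have h5 : (d / 4) ^+ 2 = d ^+ 2 / 16 by field.
  rewrite h5 in xa.
  lra.
have Oy : O y by apply: Hd; split.
have epr : 0 < eps * r by rewrite mulr_gt0.
have [c [Cc hc]] := OC y Oy (eps * r) epr.
pose z := b + eps^-1 *: (y - c).
have Cz : C z.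
  apply: ballC.
    rewrite /z addrAC subrr add0r scalemx_sub //.
    rewrite (_ : y - c = (y - c0) - (c - c0)); last by rewrite opprB addrA subrK.
    by apply: submx_B; [exact: affM | apply: spM; exists c].
  rewrite dist2_sub /z addrAC subrr add0r dist2Z -dist2_sub.
  have -> : r ^+ 2 = eps^-1 ^+ 2 * (eps * r) ^+ 2.
    by field; rewrite (gt_eqF epsp).
  by rewrite ltr_pM2l // exprn_gt0 // invr_gt0.
pose t := eps / (1 + eps).
have e1 : 0 < 1 + eps by rewrite ltr_wpDl // ltW.
have -> : x = (1 - t) *: c + t *: z.
  apply/rowP => j; rewrite /z /y /t !mxE; field.
  by rewrite (gt_eqF epsp) (gt_eqF e1).
apply: cC => //; first by rewrite divr_ge0 // ltW.
by rewrite ler_pdivrMr // mul1r lerDr ler01.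
Qed.

End Aff.
Section Sep.
Context {R : realType}.

Lemma aff_lin {N} (O : set 'rV[R]_N) z0 k (p : 'I_k -> 'rV[R]_N) (c : 'I_k -> R) :
  O z0 -> (forall i, O (p i)) -> affhull O (z0 + \sum_i c i *: (p i - z0)).
Proof.
move=> Oz0 Op.
exists k.+1, (fun i => if unlift ord_max i is Some j then p j else z0),
  (fun i => if unlift ord_max i is Some j then c j else 1 - \sum_j c j).
split; first by move=> i; case: unlift.
split.
  rewrite big_ord_recr /= unlift_none.
  under eq_bigr do rewrite unlift_widen.
  by rewrite addrC subrK.
rewrite big_ord_recr /= unlift_none.
under [X in _ = X + _]eq_bigr do rewrite unlift_widen.
under eq_bigr do rewrite scalerBr.
by rewrite sumrB -scaler_suml scalerBl scale1r addrCA.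
Qed.

Lemma small_t (Q r : R) : 0 <= Q -> 0 < r ->
  exists t0, 0 < t0 /\ forall t, 0 < t -> t <= t0 -> t ^+ 2 * Q < r ^+ 2.
Proof.
move=> Q0 r0; exists (Num.min 1 (r ^+ 2 / (Q + 1))); split.
  by rewrite lt_min ltr01 divr_gt0 ?exprn_gt0 // ltr_wpDl.
move=> t t0; rewrite le_min => /andP [t1 t2].
have Q1 : 0 < Q + 1 by rewrite ltr_wpDl.
apply: (@le_lt_trans _ _ (t * Q)).
  by rewrite expr2 -mulrA ler_piMl // mulr_ge0 // ltW.
apply: (@le_lt_trans _ _ (r ^+ 2 / (Q + 1) * Q)); first by rewrite ler_wpM2r.
rewrite mulrAC ltr_pdivrMr // ltr_pM2l ?exprn_gt0 //.
by rewrite ltrDl ltr01.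
Qed.


Lemma sep_core {N} (CE : 'rV[R]_N -> R -> Prop) (CG : set 'rV[R]_N)
    (DO GO : set 'rV[R]_N) z0 :
  cvxS CE -> cvx_set CG ->
  (forall z t, CE z t -> DO z) -> CG `<=` GO -> DO z0 -> GO z0 ->
  (exists r, 0 < r /\ forall z, dist2 z z0 < r ^+ 2 -> affhull DO z -> exists t, CE z t) ->
  (exists r, 0 < r /\ (eball z0 r `&` affhull GO) `<=` CG) ->
  (forall z t, CE z t -> CG z -> 0 <= t) ->
  exists b, forall z1 t z2, CE z1 t -> CG z2 -> dotv b (z1 - z2) <= t.
Proof.
move=> cE cG ED GG Dz0 Gz0 [r1 [r10 H1]] [r2 [r20 H2]] pos.
pose S u s := exists z1 z2, [/\ CE z1 s, CG z2 & u = z1 - z2].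
have [k [M [XM spM]]] := span_max [set u | exists s, S u s].
pose Pi := pinvmx M *m M.
pose S' (y : 'rV[R]_N) s := S (y *m Pi) s.
have cS : cvxS S.
  move=> u1 s1 u2 s2 l [a1 [b1 [Ea1 Gb1 ->]]] [a2 [b2 [Ea2 Gb2 ->]]] l0 l1.
  exists (l *: a1 + (1 - l) *: a2), (l *: b1 + (1 - l) *: b2); split.
  - exact: cE.
  - by have := cG b2 b1 l Gb2 Gb1 l0 l1; rewrite addrC.
  - by rewrite !scalerBr addrACA opprD.
have cS' : cvxS S'.
  move=> u1 s1 u2 s2 l h1 h2 l0 l1; rewrite /S' mulmxDl -!scalemxAl.
  exact: cS.
have S'0 : forall s, S' 0 s -> 0 <= s.
  move=> s; rewrite /S' mul0mx => -[z1 [z2 [E1 G2 /eqP]]].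
  by rewrite eq_sym subr_eq0 => /eqP eq12; apply: (pos z1) => //; rewrite eq12.
have rows : forall i, exists pq : 'rV[R]_N * 'rV[R]_N,
    [/\ exists s, CE pq.1 s, CG pq.2 & row i M = pq.1 - pq.2].
  move=> i; have [s [z1 [z2 [E1 G2 e]]]] := XM i.
  by exists (z1, z2); split => //; exists s.
have [pq hpq] := choice rows.
have core : forall y, exists t, 0 < t /\ exists s, S' (t *: y) s.
  move=> y.
  pose w := y *m Pi.
  pose mu := y *m pinvmx M.
  have wE : w = \sum_i mu 0 i *: row i M by rewrite /w /Pi mulmxA mulmx_sum_row.
  pose d1 := \sum_i mu 0 i *: ((pq i).1 - z0).
  pose d2 := \sum_i mu 0 i *: ((pq i).2 - z0).
  have wd : w = d1 - d2.
    rewrite wE /d1 /d2 -sumrB; apply: eq_bigr => i _.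
    have [_ _ ->] := hpq i.
    by rewrite -scalerBr opprB addrA subrK.
  have [t1 [t10 ht1]] := small_t _ _ (dist2_ge0 d1 0) r10.
  have [t2 [t20 ht2]] := small_t _ _ (dist2_ge0 d2 0) r20.
  pose t := Num.min t1 t2.
  have t0 : 0 < t by rewrite lt_min t10 t20.
  have tt1 : t <= t1 by rewrite ge_min lexx.
  have tt2 : t <= t2 by rewrite ge_min lexx orbT.
  have [s Es] : exists s, CE (z0 + t *: d1) s.
    apply: H1.
      by rewrite dist2_sub addrAC subrr add0r dist2Z; exact: ht1.
    rewrite /d1 scaler_sumr.
    under eq_bigr do rewrite scalerA.
    apply: aff_lin => // i.
    by have [[s' Es'] _ _] := hpq i; exact: (ED _ s').
  have Gd2 : CG (z0 + t *: d2).
    apply: H2; split.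
      by rewrite /eball /= dist2_sub addrAC subrr add0r dist2Z; exact: ht2.
    rewrite /d2 scaler_sumr.
    under eq_bigr do rewrite scalerA.
    apply: aff_lin => // i.
    by have [_ G2 _] := hpq i; exact: GG.
  exists t; split => //; exists s; rewrite /S' /S.
  exists (z0 + t *: d1), (z0 + t *: d2); split => //.
  rewrite -scalemxAl -/w wd scalerBr.
  by rewrite opprD addrACA subrr add0r.
have [b Hb] := HB_set _ cS' S'0 core.
exists b => z1 t z2 E1 G2.
apply: Hb; rewrite /S' proj_id; first by exists z1, z2.
by apply: spM; exists t, z1, z2.
Qed.

End Sep.
Section Final.
Context {R : realType}.

Lemma dist2_row_mx {n p} (x1 x2 : 'rV[R]_n) (y1 y2 : 'rV[R]_p) :
  dist2 (row_mx x1 y1) (row_mx x2 y2) = dist2 x1 x2 + dist2 y1 y2.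
Proof. by rewrite !dist2E opp_row_mx add_row_mx dotv_row_mx. Qed.

Lemma ecl_le {N} (C : set 'rV[R]_N) (d v : 'rV[R]_N) be :
  (forall u, C u -> dotv d u <= be) -> eclosure C v -> dotv d v <= be.
Proof.
move=> H vC; apply/ler_addgt0Pr => e e0.
set K := \sum_(j < N) `|d 0 j|.
have K0 : 0 <= K by apply: sumr_ge0.
pose rho := e / (K + 1).
have rho0 : 0 < rho by rewrite divr_gt0 // ltr_wpDl.
have [u [Cu hu]] := vC rho rho0.
have -> : v = u + (v - u) by rewrite addrC subrK.
rewrite dotvDr; apply: lerD; first exact: H.
have h1 : dist2 (v - u) 0 < rho ^+ 2 by rewrite -dist2_sub.
apply: le_trans (ler_norm _) _; have := dotv_small d (v - u) rho rho0 h1 => /le_trans; apply.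
rewrite /rho mulrAC ler_pdivrMr ?ltr_wpDl // ler_wpM2l ?(ltW e0) //.
by rewrite lerDl.
Qed.

Definition ext {N} (z : 'rV[R]_N) (t : R) : 'rV[R]_(N + 1) := row_mx z (\row_(j < 1) t).

Lemma ext_comb {N} (z1 z2 : 'rV[R]_N) t1 t2 l :
  l *: ext z1 t1 + (1 - l) *: ext z2 t2 =
  ext (l *: z1 + (1 - l) *: z2) (l * t1 + (1 - l) * t2).
Proof.
rewrite /ext !scale_row_mx add_row_mx; congr row_mx.
by apply/rowP => j; rewrite !mxE.
Qed.

Lemma ext_inj {N} {z1 z2 : 'rV[R]_N} {t1 t2 : R} : ext z1 t1 = ext z2 t2 -> z1 = z2 /\ t1 = t2.
Proof.
move=> /eq_row_mx [-> h]; split => //.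
by have := congr1 (fun m : 'rV[R]_1 => m 0 0) h; rewrite /= !mxE.
Qed.

Lemma extK {N} (W : 'rV[R]_(N + 1)) : W = ext (lsubmx W) (rsubmx W 0 0).
Proof.
rewrite /ext -{1}(hsubmxK W); congr row_mx.
by apply/rowP => j; rewrite (ord1 j) mxE.
Qed.

Lemma dotv_ext {N} (d z : 'rV[R]_N) (a t : R) :
  dotv (ext d a) (ext z t) = dotv d z + a * t.
Proof. by rewrite dotv_row_mx /dotv big_ord1 !mxE. Qed.

Lemma dist2_ext {N} (z1 z2 : 'rV[R]_N) (t1 t2 : R) :
  dist2 z1 z2 <= dist2 (ext z1 t1) (ext z2 t2).
Proof. by rewrite dist2_row_mx lerDl dist2_ge0. Qed.


Lemma attain_b {n p} (f : 'rV[R]_n -> 'rV[R]_p -> \bar R) (F : 'rV[R]_n -> set 'rV[R]_p)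
    (w : 'rV[R]_n) (al : R) :
  proper_fun f -> nearly_convex_fun f -> nearly_convex_map F ->
  relint (domf f) `&` relint (gph F) !=set0 ->
  (forall x y, F x y -> ((dotv w x)%:E - f x y <= al%:E)%E) ->
  exists b : 'rV[R]_(n + p), forall x1 y1 (t : R) x2 y2,
    (f x1 y1 <= t%:E)%E -> F x2 y2 ->
    dotv b (row_mx x1 y1 - row_mx x2 y2) + dotv w x1 - t <= al.
Proof.
move=> [_ nfin] [CEp [cvE [CEsub Esub]]] [CGp [cvG [CGsub Gsub]]]
  [z0 [[Dz0 [d1 [d10 Hd1]]] [Gz0 [d2 [d20 Hd2]]]]] Hal.
pose CE (z : 'rV[R]_(n + p)) t := CEp (ext z t).
have cE : cvxS CE.
  move=> z1 t1 z2 t2 l h1 h2 l0 l1; rewrite /CE -ext_comb.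
  have oml : 1 - (1 - l) = l by ring.
  have := cvE _ _ (1 - l) h1 h2; rewrite oml; apply.
    by rewrite subr_ge0.
  by rewrite lerBlDr lerDl.
have epiE : forall z t, CE z t -> exists x y, z = row_mx x y /\ (f x y <= t%:E)%E.
  move=> z t /CEsub [x [y [a [e fa]]]]; have [-> ta] := ext_inj e.
  by exists x, y; rewrite ta.
have ED : forall z t, CE z t -> domf f z.
  move=> z t /epiE [x [y [-> ft]]]; exists x, y; split => //.
  exact: le_lt_trans ft (ltry _).
have cD : cvx_set [set z | exists t, CE z t].
  move=> x y t [tx Ex] [ty Ey] t0 t1.
  exists ((1 - t) * tx + (1 - (1 - t)) * ty).
  have omt : 1 - (1 - t) = t by ring.
  have := cE x tx y ty (1 - t) Ex Ey; rewrite omt; apply.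
    by rewrite subr_ge0.
  by rewrite lerBlDr lerDl.
have Dcl : domf f `<=` eclosure [set z | exists t, CE z t].
  move=> z [x [y [-> fy]]] e e0.
  have [a fa] : exists a, f x y = a%:E.
    move: fy (nfin x y); case: (f x y) => // a _ _; by exists a.
  have : epi f (ext (row_mx x y) a) by exists x, y, a; rewrite fa.
  move=> /Esub /(_ e e0) [W [CW dW]].
  exists (lsubmx W); split; first by exists (rsubmx W 0 0); rewrite /CE -extK.
  apply: le_lt_trans dW; rewrite {2}(extK W); exact: dist2_ext.
have [r1 [r10 H1]] := ri_core _ _ _ _ cD (fun z => fun '(ex_intro t h) => ED z t h) Dcl Dz0 d10 Hd1.
have [r2 [r20 H2]] := ri_core _ _ _ _ cvG CGsub Gsub Gz0 d20 Hd2.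
pose c : 'rV[R]_(n + p) := row_mx w 0.
have dc : forall x y, dotv c (row_mx x y) = dotv w x by move=> x y; rewrite dotv_row_mx dotv0l addr0.
pose CE' z s := exists t, CE z t /\ s = t - dotv c z + al.
have cE' : cvxS CE'.
  move=> z1 s1 z2 s2 l [t1 [E1 ->]] [t2 [E2 ->]] l0 l1.
  exists (l * t1 + (1 - l) * t2); split; first exact: cE.
  by rewrite dotvDr !dotvZr; ring.
have pos : forall z s, CE' z s -> CGp z -> 0 <= s.
  move=> z s [t [/epiE [x [y [-> ft]]] ->]] /CGsub [x' [y' [e Fxy]]].
  have [ex ey] := eq_row_mx e; subst x' y'.
  have := Hal _ _ Fxy; rewrite dc => h.
  have h2 : ((dotv w x)%:E - t%:E <= al%:E)%E.
    by apply: le_trans h; apply: leeB.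
  move: h2; rewrite -EFinB lee_fin => h2; lra.
have ED' : forall z s, CE' z s -> domf f z by move=> z s [t [h _]]; exact: ED h.
have H1' : exists r, 0 < r /\ forall z, dist2 z z0 < r ^+ 2 -> affhull (domf f) z ->
    exists s, CE' z s.
  exists r1; split => // z hz ha; have [t h] := H1 z (conj hz ha).
  by exists (t - dotv c z + al), t.
have H2' : exists r, 0 < r /\ (eball z0 r `&` affhull (gph F)) `<=` CGp by exists r2.
have [b Hb] := sep_core _ _ _ _ _ cE' cvG ED' CGsub Dz0 Gz0 H1' H2' pos.
have Hb2 : forall z1 t z2, CE z1 t -> CGp z2 ->
    dotv (ext (b + c) (-1)) (ext z1 t) <= al + dotv b z2.
  move=> z1 t z2 E1 G2; have := Hb z1 _ z2 (ex_intro _ t (conj E1 erefl)) G2.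
  rewrite dotv_ext dotvBr dotvDl; lra.
exists b => x1 y1 t x2 y2 ft Fx2.
have step1 : forall z2, CGp z2 ->
    dotv (ext (b + c) (-1)) (ext (row_mx x1 y1) t) <= al + dotv b z2.
  move=> z2 G2; apply: (ecl_le CEp) (Esub _ _) => [W CW|].
    by rewrite (extK W); apply: Hb2 => //; rewrite /CE -extK.
  by exists x1, y1, t.
have step2 : dotv (- b) (row_mx x2 y2) <= al -
    dotv (ext (b + c) (-1)) (ext (row_mx x1 y1) t).
  apply: (ecl_le CGp); last by apply: Gsub; exists x2, y2.
  by move=> u Gu; rewrite dotvNl; have := step1 u Gu; lra.
move: step2; rewrite dotv_ext dotvNl dotvDl dc dotvBr; lra.
Qed.

End Final.
Section Ereal.
Context {R : realType}.
Local Open Scope ereal_scope.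

Lemma sub_inf_le (r : R) (S : set \bar R) (Q : \bar R) :
  (forall s, S s -> r%:E - s <= Q) -> r%:E - ereal_inf S <= Q.
Proof.
case: Q => [q| |] H; last 2 first.
- exact: leey.
- have : ereal_inf S = +oo.
    apply/eqP; rewrite eq_le leey /=; apply/ereal_infP => s Ss.
    move: (H s Ss); case: s {Ss} => [s'| |] //=.
  by move=> ->.
have lb : (r - q)%:E <= ereal_inf S.
  apply/ereal_infP => s Ss; move: (H s Ss); case: s {Ss} => [s'| |] //=.
    by rewrite -EFinB !lee_fin => h; rewrite lerBlDr -lerBlDl.
  by move=> _; exact: leey.
apply: le_trans (leeB (lexx r%:E) lb) _.
by rewrite -EFinB lee_fin opprB addrC subrK.
Qed.

End Ereal.

Theorem theorem6p3 (R : realType) (n p : nat)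
  (f : 'rV[R]_n -> 'rV[R]_p -> \bar R) (F : 'rV[R]_n -> set 'rV[R]_p) :
  proper_fun f -> nearly_convex_fun f -> nearly_convex_map F ->
  relint (domf f) `&` relint (gph F) !=set0 ->
  forall w : 'rV[R]_n,
    fconj (optval f F) w = infconv (fconj2 f) (mapconj F) w 0 /\
    (fconj (optval f F) w \is a fin_num ->
      exists (w1 w2 : 'rV[R]_n) (v : 'rV[R]_p), w1 + w2 = w /\
        fconj (optval f F) w = (fconj2 f w1 v + mapconj F w2 (- v))%E).
Proof.
move=> prf ncf ncF ri w.
pose Phi := ereal_sup [set t | exists x y, F x y /\ t = ((dotv w x)%:E - f x y)%E].
have ePhi : fconj (optval f F) w = Phi.
  apply/eqP; rewrite eq_le; apply/andP; split.
    apply: ge_ereal_sup => _ [x ->]; apply: sub_inf_le => _ [y [Fxy ->]].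
    by apply: ereal_sup_ubound; exists x, y.
  apply: ge_ereal_sup => _ [x [y [Fxy ->]]].
  apply: le_trans (_ : ((dotv w x)%:E - optval f F x <= _)%E).
    apply: leeB => //; apply: ereal_inf_lbound; by exists y.
  by apply: ereal_sup_ubound; exists x.
have weak : forall w1 w2 v1 v2, w1 + w2 = w -> v1 + v2 = 0 ->
    (Phi <= fconj2 f w1 v1 + mapconj F w2 v2)%E.
  move=> w1 w2 v1 v2 ew ev; apply: ge_ereal_sup => _ [x [y [Fxy ->]]].
  have h1 : ((dotv w1 x + dotv v1 y)%:E - f x y <= fconj2 f w1 v1)%E.
    by apply: ereal_sup_ubound; exists x, y.
  have h2 : ((dotv w2 x + dotv v2 y)%:E <= mapconj F w2 v2)%E.
    by apply: ereal_sup_ubound; exists x, y.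
  have e : ((dotv w x)%:E - f x y =
     ((dotv w1 x + dotv v1 y)%:E - f x y) + (dotv w2 x + dotv v2 y)%:E)%E.
    rewrite addeAC -EFinD; congr (_ - _)%E; congr (_%:E).
    have -> : v2 = - v1 by rewrite -(subr0 v2) -ev opprD addrCA subrr addr0.
    by rewrite -ew dotvDl dotvNl; ring.
  by rewrite e; exact: leeD.
have [x0 [y0 [F0 f0]]] : exists x0 y0, F x0 y0 /\ (f x0 y0 < +oo)%E.
  case: ri => z0 [[[x [y [ez fxy]]] _] [[x' [y' [ez' Fxy]]] _]].
  move: ez'; rewrite ez => /eq_row_mx [ex ey]; subst x' y'.
  by exists x, y.
have [t0 ft0] : exists t0 : R, f x0 y0 = t0%:E.
  move: f0 (prf.2 x0 y0); case: (f x0 y0) => // a _ _; by exists a.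
have ft0' : (f x0 y0 <= t0%:E)%E by rewrite ft0.
have attain : forall al : R, Phi = al%:E ->
    exists (w1 w2 : 'rV[R]_n) (v : 'rV[R]_p), w1 + w2 = w /\
    (fconj2 f w1 v + mapconj F w2 (- v) <= al%:E)%E.
  move=> al ePal.
  have Hal : forall x y, F x y -> ((dotv w x)%:E - f x y <= al%:E)%E.
    by move=> x y Fxy; rewrite -ePal; apply: ereal_sup_ubound; exists x, y.
  have [b Hb] := attain_b _ _ w _ prf ncf ncF ri Hal.
  set bx := lsubmx b; set by_ := rsubmx b.
  have eb : b = row_mx bx by_ by rewrite hsubmxK.
  exists (w + bx), (- bx), by_; split; first by rewrite addrK.
  pose U := al - dotv b (row_mx x0 y0) - dotv w x0 + t0.
  have elemG : forall x2 y2, (dotv (- bx) x2 + dotv (- by_) y2) = - dotv b (row_mx x2 y2).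
    by move=> x2 y2; rewrite eb dotv_row_mx !dotvNl opprD.
  have sigU : (mapconj F (- bx) (- by_) <= U%:E)%E.
    apply: ge_ereal_sup => _ [x2 [y2 [Fxy ->]]]; rewrite elemG lee_fin.
    have := Hb x0 y0 t0 x2 y2 ft0' Fxy.
    rewrite /U dotvBr; lra.
  have sigL : ((- dotv b (row_mx x0 y0))%:E <= mapconj F (- bx) (- by_))%E.
    by apply: ereal_sup_ubound; exists x0, y0; rewrite elemG.
  have [s es] : exists s : R, mapconj F (- bx) (- by_) = s%:E.
    move: sigU sigL; case: (mapconj F (- bx) (- by_)) => // a _ _; by exists a.
  rewrite es.
  have fs : (fconj2 f (w + bx) by_ <= (al - s)%:E)%E.
    apply: ge_ereal_sup => _ [x [y ->]].
    case ef : (f x y) => [t| |]; last 2 first.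
    - by rewrite /= leNye.
    - by have := prf.2 x y; rewrite ef.
    rewrite -EFinB lee_fin.
    have hs : s <= al - (dotv b (row_mx x y) + dotv w x - t).
      rewrite -lee_fin -es; apply: ge_ereal_sup => _ [x2 [y2 [Fxy ->]]].
      rewrite elemG lee_fin.
      have := Hb x y t x2 y2 (ltac:(by rewrite ef)) Fxy.
      rewrite dotvBr; lra.
    move: hs; rewrite eb dotv_row_mx dotvDl; lra.
  by apply: le_trans (leeD fs (lexx _)) _; rewrite -EFinD subrK.
have Phi_gt : (-oo < Phi)%E.
  apply: lt_le_trans (_ : ((dotv w x0)%:E - f x0 y0 <= Phi)%E).
    by rewrite ft0 -EFinB ltNyr.
  by apply: ereal_sup_ubound; exists x0, y0.
rewrite ePhi; clear ePhi; clearbody Phi; split.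
  apply/eqP; rewrite eq_le; apply/andP; split.
    by apply/ereal_infP => _ [w1 [w2 [v1 [v2 [e1 [e2 ->]]]]]]; exact: weak.
  move: Phi_gt attain weak; case: Phi => [al| |] // _ att _.
    have [w1 [w2 [v [e1 hv]]]] := att al erefl.
    apply: le_trans hv; apply: ereal_inf_lbound.
    by exists w1, w2, v, (- v); rewrite subrr.
  exact: leey.
move=> fin; move: Phi_gt fin attain weak.
case: Phi => [al| |] // _ _ att wk.
have [w1 [w2 [v [e1 hv]]]] := att al erefl.
exists w1, w2, v; split => //.
apply/eqP; rewrite eq_le hv andbT; apply: wk => //.
by rewrite subrr.
Qed.
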